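(* Let $A,B$ be Hermitian operators on $\mathbb{C}^N$ having $N_A$ and $N_B$ distinct eigenvalues, respectively. If the KD distribution of $(A,B)$ distinguishes all states (i.e. $\rho\mapsto K^{A,B}_\rho$ is injective on density operators on $\mathbb{C}^N$), then $2N^2-1\le(2N_A-1)(2N_B-1)$.
   Context: A density operator is a positive semidefinite trace-one operator. Kirkwood–Dirac (KD) distribution: for Hermitian operators $A_1,\dots,A_n$ on $\mathbb{C}^N$ and a density operator $\rho$, define $\#^{K}_{A_1,\dots,A_n}(x)=(2\pi)^{-n}\int_{\mathbb{R}^n} e^{-is_1A_1}\cdots e^{-is_nA_n}\,e^{i s\cdot x}\,d^ns$ (inverse Fourier transform in the distributional sense), and $K^{A_1,\dots,A_n}_\rho(x)=\mathrm{Tr}[\#^{K}_{A_1,\dots,A_n}(x)\,\rho]$. *)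

(* Defs.v *)
From mathcomp Require Import all_boot all_algebra.
From mathcomp Require Import sesquilinear spectral complex reals.
Set Implicit Arguments. Unset Strict Implicit. Unset Printing Implicit Defensive.
Import GRing.Theory Num.Theory Num.Def.
Local Open Scope ring_scope.
Local Open Scope complex_scope.
Local Open Scope sesquilinear_scope.

Section KD.
Variable R : realType.
Local Notation C := R[i].

Definition adjmx N (M : 'M[C]_N) : 'M[C]_N := M ^t conjC.

Definition is_hermitian_op N (A : 'M[C]_N) : Prop := adjmx A = A.

Definition density N (rho : 'M[C]_N) : Prop :=
  [/\ is_hermitian_op rho,
      (forall x : 'cV[C]_N, 0 <= ((x ^t conjC) *m rho *m x) 0 0)
    & \tr rho = 1].

Definition num_distinct_eigenvalues N (A : 'M[C]_N) (n : nat) : Prop :=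
  exists s : seq C, [/\ uniq s, size s = n & forall a, eigenvalue A a = (a \in s)].

(* Spectral projector of A at a (column-vector convention): the orthogonal
   projector onto ker (A - a), i.e. onto {x : 'cV_N | A *m x = a *: x};
   it is 0 when a is not an eigenvalue.  proj_ortho works with row vectors,
   the column eigenspace of A is the row eigenspace of A^T, hence the transposes. *)
Definition specproj N (A : 'M[C]_N) (a : C) : 'M[C]_N :=
  (proj_ortho (eigenspace A^T a))^T.

(* For finite-dimensional A, B with spectral decompositions A = sum_i a_i P_i,
   B = sum_j b_j Q_j, the KD quasiprobability distribution is the
   finitely supported (atomic) distribution
     K_rho^{A,B}(x) = sum_{i,j} Tr(P_i Q_j rho) delta(x1 - a_i) delta(x2 - b_j).
   We represent it by its weight function on R^2: the weight at x = (x1,x2)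
   is Tr(P_A(x1) P_B(x2) rho), which vanishes off the finite set of atoms. *)
Definition KD N (A B rho : 'M[C]_N) (x : R * R) : C :=
  \tr (specproj A (x.1)%:C *m specproj B (x.2)%:C *m rho).

Definition KD_distinguishes_states N (A B : 'M[C]_N) : Prop :=
  forall rho sigma : 'M[C]_N, density rho -> density sigma ->
    KD A B rho = KD A B sigma -> rho = sigma.
End KD.

(* Main.v *)
From HB Require Import structures.
Require Import Defs.
From mathcomp Require Import all_boot all_order all_algebra.
From mathcomp Require Import sesquilinear spectral complex reals.
From mathcomp Require boolp.
From mathcomp Require Import zify.
Import Order.TTheory GRing.Theory Num.Theory.
Local Open Scope complex_scope.
Local Open Scope ring_scope.
Local Open Scope sesquilinear_scope.
Set Implicit Arguments. Unset Strict Implicit.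

Section Base.
Variable R : realType.
Local Notation C := R[i].
Local Notation Im := (@complex.Im R).
Local Notation Re := (@complex.Re R).


Lemma adjM m n p (X : 'M[C]_(m,n)) (Y : 'M[C]_(n,p)) : (X *m Y)^t* = Y^t* *m X^t*.
Proof. by rewrite trmx_mul map_mxM. Qed.

Lemma proj_ortho_herm p n (U : 'M[C]_(p,n)) : (proj_ortho U)^t* = proj_ortho U.
Proof.
set P := proj_ortho U.
have h1 : (P <= U)%MS by rewrite -[P]mul1mx proj_ortho_sub.
have h2 := proj_ortho_compl_sub U 1%:M; rewrite mul1mx in h2.
have h3 : P *m (1%:M - P)^t* = 0.
  apply/orthomx1P; rewrite orthomx_sym; apply: submx_trans h2 _.
  by rewrite submx_ortho.
have e : (1%:M - P : 'M[C]_n)^t* = 1%:M - P^t*.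
  by rewrite linearB /= map_mxB trmx1 map_mx1.
have h4 : P = P *m P^t*.
  by apply/eqP; rewrite -subr_eq0 -{1}[P]mulmx1 -mulmxBr -e h3.
by rewrite {1}h4 adjM trmxCK -h4.
Qed.




Lemma adjZ m n (a : C) (X : 'M[C]_(m,n)) : (a *: X)^t* = a^* *: X^t*.
Proof. by rewrite linearZ /= map_mxZ. Qed.

Lemma eigenvalue_tr (F : fieldType) n (A : 'M[F]_n) a : eigenvalue A^T a = eigenvalue A a.
Proof.
rewrite /eigenvalue /eigenspace !kermx_eq0 /row_free.
have -> : A^T - a%:M = (A - a%:M)^T by rewrite linearB /= tr_scalar_mx.
by rewrite mxrank_tr.
Qed.

Lemma eigsp_mul n (G : 'M[C]_n) a : eigenspace G a *m G = a *: eigenspace G a.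
Proof.
have := mulmx_ker (G - a%:M); rewrite mulmxBr mul_mx_scalar => /eqP.
by rewrite subr_eq0 => /eqP.
Qed.

Lemma herm_aux n m p (G : 'M[C]_n) (E : 'M_(m,n)) (F : 'M_(p,n)) a b :
  G^t* = G -> E *m G = a *: E -> F *m G = b *: F ->
  a *: (E *m F^t*) = b^* *: (E *m F^t*).
Proof.
move=> hG hE hF; rewrite scalemxAl -hE -mulmxA.
have e : G *m F^t* = (F *m G)^t* by rewrite adjM hG.
by rewrite e hF adjZ scalemxAr.
Qed.

Lemma herm_eig_aux n (G : 'M[C]_n) a b : G^t* = G ->
  a *: (eigenspace G a *m (eigenspace G b)^t*) =
  b^* *: (eigenspace G a *m (eigenspace G b)^t*).
Proof. by move=> hG; exact: (herm_aux hG (eigsp_mul G a) (eigsp_mul G b)). Qed.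

Lemma mxE0 n m (E : 'M[C]_(m, n)) : E *m E^t* = 0 -> E = 0.
Proof.
move=> h.
have hE := introT (orthomx1P (A:=E) (B:=E)) h.
apply/eqP; rewrite -mxrank_eq0 -(capmx_idPl hE).
by rewrite orthomx_ortho_disj mxrank0.
Qed.


Lemma herm_eig_real n (G : 'M[C]_n) a : G^t* = G -> eigenvalue G a -> a^* = a.
Proof.
move=> hG ev; have := herm_eig_aux a a hG.
move/eqP; rewrite -subr_eq0 -scalerBl scaler_eq0 subr_eq0 => /orP[/eqP/esym//|].
move/eqP/mxE0 => E0; move: ev; rewrite /eigenvalue.
by rewrite -/(eigenspace G a) E0 eqxx.
Qed.

Lemma herm_eig_orth n (G : 'M[C]_n) a b : G^t* = G -> b^* = b -> a != b ->
  eigenspace G a *m (eigenspace G b)^t* = 0.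
Proof.
move=> hG hb nab; have := herm_eig_aux a b hG; rewrite hb.
move/eqP; rewrite -subr_eq0 -scalerBl scaler_eq0 subr_eq0 (negbTE nab).
by move/eqP.
Qed.


Lemma sum_proj_row n (v : 'rV[C]_n) (s : seq C) (E : C -> 'M[C]_n) b :
  uniq s -> b \in s -> (v <= E b)%MS ->
  (forall a, a \in s -> a != b -> v *m (E a)^t* = 0) ->
  v *m \sum_(a <- s) proj_ortho (E a) = v.
Proof.
move=> us bs vb h.
rewrite mulmx_sumr (bigD1_seq b) //= proj_ortho_id // big1_seq ?addr0 //.
move=> a /andP[ne ain]; apply: proj_ortho_0; rewrite orthomx1E.
by rewrite h.
Qed.

Lemma herm_complete n (G : 'M[C]_n) (s : seq C) : G^t* = G -> uniq s ->
  (forall a, eigenvalue G a = (a \in s)) ->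
  \sum_(a <- s) proj_ortho (eigenspace G a) = 1%:M.
Proof.
move=> hG us hs.
set P := spectralmx G; set d := spectral_diag G.
have nG : G \is normalmx by rewrite qualifE /= hG.
have eG : G = invmx P *m diag_mx d *m P by apply/orthomx_spectralP.
have PU : P \in unitmx := spectral_unit G.
have PG : P *m G = diag_mx d *m P.
  by rewrite [in LHS]eG !mulmxA mulmxV // mul1mx.
have rowk k : row k P *m G = d 0 k *: row k P.
  by rewrite -row_mul PG row_mul row_diag_mx -scalemxAl -rowE.
have rowEk k : (row k P <= eigenspace G (d 0 k))%MS.
  by apply/sub_kermxP; rewrite mulmxBr rowk mul_mx_scalar subrr.
have rown0 k : row k P != 0.
  apply/eqP => e; have := row_mul k P (invmx P).
  rewrite e mul0mx mulmxV // => /rowP/(_ k); rewrite !mxE eqxx /= => /eqP.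
  by rewrite oner_eq0.
have evk k : d 0 k \in s.
  rewrite -hs /eigenvalue; apply/negP => /eqP E0.
  by move: (rowEk k); rewrite -/(eigenspace G _) E0 submx0 (negbTE (rown0 k)).
set S := \sum_(a <- s) _.
have key k : row k P *m S = row k P.
  apply: (sum_proj_row us (evk k) (rowEk k)) => a ain ne.
  have [D ->] := submxP (rowEk k).
  have ev : eigenvalue G a by rewrite hs.
  have ra := herm_eig_real hG ev.
  have nb : d 0 k != a by rewrite eq_sym.
  by rewrite -mulmxA (herm_eig_orth hG ra nb) mulmx0.
have PS : P *m S = P by apply/row_matrixP => k; rewrite row_mul key.
by have := congr1 (mulmx (invmx P)) PS; rewrite mulKmx // mulVmx.
Qed.



Lemma quadE n (x : 'cV[C]_n) (H : 'M[C]_n) :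
  (x^t* *m H *m x) 0 0 = \sum_j \sum_i ((x i 0)^* * H i j * x j 0).
Proof.
rewrite mxE; apply: eq_bigr => j _; rewrite mxE mulr_suml.
by apply: eq_bigr => i _; rewrite !mxE.
Qed.

Lemma quad_real n (x : 'cV[C]_n) (H : 'M[C]_n) : H^t* = H ->
  ((x^t* *m H *m x) 0 0)^* = (x^t* *m H *m x) 0 0.
Proof.
move=> hH; have hij i j : (H i j)^* = H j i.
  by rewrite -[in RHS]hH !mxE.
rewrite quadE rmorph_sum /=. rewrite exchange_big /=. apply: eq_bigr => j _.
rewrite rmorph_sum; apply: eq_bigr => i _ /=.
by rewrite !rmorphM /= conjCK hij mulrC (mulrC (x i 0)) mulrA.
Qed.

Lemma sq_le_sum n (x : 'cV[C]_n) i :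
  `|x i 0| ^+ 2 <= \sum_k `|x k 0| ^+ 2.
Proof.
rewrite (bigD1 i) //= lerDl; apply: sumr_ge0 => k _; exact: exprn_ge0.
Qed.

Lemma prod_le_sum n (x : 'cV[C]_n) i j :
  `|x i 0| * `|x j 0| <= \sum_k `|x k 0| ^+ 2.
Proof.
have S0 : 0 <= \sum_k `|x k 0| ^+ 2 by apply: sumr_ge0 => k _; exact: exprn_ge0.
rewrite -(ler_pXn2r (n:=2)) //; last by rewrite qualifE /= mulr_ge0.
rewrite exprMn [in X in _ <= X]expr2; apply: ler_pM => //; try exact: exprn_ge0; exact: sq_le_sum.
Qed.

Lemma quad_bound n (x : 'cV[C]_n) (H : 'M[C]_n) :
  `|(x^t* *m H *m x) 0 0| <= (\sum_j \sum_i `|H i j|) * (x^t* *m x) 0 0.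
Proof.
have -> : (x^t* *m x) 0 0 = \sum_k `|x k 0| ^+ 2.
  by rewrite mxE; apply: eq_bigr => k _; rewrite !mxE normCKC.
rewrite quadE mulr_suml; apply: le_trans (ler_norm_sum _ _ _) _.
apply: ler_sum => j _; rewrite mulr_suml; apply: le_trans (ler_norm_sum _ _ _) _.
apply: ler_sum => i _; rewrite !normrM norm_conjC mulrAC -mulrA.
by rewrite mulrA mulrC; apply: ler_wpM2l => //; exact: prod_le_sum.
Qed.






Lemma normsq_ge0 n (x : 'cV[C]_n) : 0 <= (x^t* *m x) 0 0.
Proof.
rewrite mxE; apply: sumr_ge0 => k _; rewrite !mxE -normCKC; exact: exprn_ge0.
Qed.

Lemma density_rho n (H : 'M[C]_n) (c : C) : (0 < n)%N -> H^t* = H -> \tr H = 0 ->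
  0 < c -> \sum_j \sum_i `|H i j| <= c ->
  density ((n%:R * c)^-1 *: (c%:M + H)).
Proof.
move=> n0 hH tH c0 hc.
have k0 : 0 < (n%:R * c)^-1 by rewrite invr_gt0 mulr_gt0 // ltr0n.
set k := (n%:R * c)^-1 in k0 *.
have rk : k^* = k by apply/conj_Creal/gtr0_real.
have rc : c^* = c by apply/conj_Creal/gtr0_real.
split.
- rewrite /is_hermitian_op /adjmx adjZ linearD map_mxD /= tr_scalar_mx.
  by rewrite map_scalar_mx /= rk rc hH.
- move=> x; rewrite -scalemxAr -scalemxAl mxE; apply: mulr_ge0; first exact: ltW.
  rewrite mulmxDr mulmxDl mxE mul_mx_scalar -scalemxAl mxE.
  set q := (x^t* *m H *m x) 0 0.
  have rq : q \is Num.real by apply/CrealP; apply: quad_real.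
  have qb : `|q| <= c * (x^t* *m x) 0 0.
    apply: le_trans (quad_bound x H) _; apply: ler_wpM2r; first exact: normsq_ge0.
    exact: hc.
  move: qb; rewrite real_ler_norml // => /andP[qb _].
  by move: qb; rewrite -(lerD2l (c * (x^t* *m x) 0 0)) subrr.
- rewrite mxtraceZ mxtraceD mxtrace_scalar tH addr0 -mulr_natl mulVf //.
  by rewrite mulf_neq0 // ?pnatr_eq0 -?lt0n // gt_eqF.
Qed.


Lemma KD_zero n (A B H : 'M[C]_n) : KD_distinguishes_states A B -> H^t* = H ->
  \tr H = 0 -> KD A B H = KD A B 0 -> H = 0.
Proof.
move=> hD hH tH hK.
case: n A B H hD hH tH hK => [|n] A B H hD hH tH hK; first by apply/matrixP => -[].
set c := \sum_j \sum_i `|H i j| + 1.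
have S0 : 0 <= \sum_j \sum_i `|H i j| by apply: sumr_ge0 => j _; apply: sumr_ge0.
have c0 : 0 < c by rewrite /c ltr_wpDl.
have hc : \sum_j \sum_i `|H i j| <= c by rewrite /c lerDl.
have r1 := density_rho (isT : (0 < n.+1)%N) hH tH c0 hc.
have h0 : (0 : 'M[C]_n.+1)^t* = 0 by rewrite linear0 map_mx0.
have hc0 : \sum_j \sum_i `|(0 : 'M[C]_n.+1) i j| <= c.
  rewrite big1 ?ltW // => j _; rewrite big1 // => i _; rewrite mxE normr0 //.
have r2 := density_rho (isT : (0 < n.+1)%N) h0 (mxtrace0 _ _) c0 hc0.
have := hD _ _ r1 r2.
have k0 : (n.+1%:R * c)^-1 != 0 by rewrite invr_eq0 mulf_neq0 ?pnatr_eq0 // gt_eqF.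
move/(_ _)/(scalerI k0)/addrI; apply.
apply: boolp.funext => x; rewrite /KD -!scalemxAr !mxtraceZ !mulmxDr !mxtraceD.
by have := congr1 (fun f => f x) hK; rewrite /KD => ->.
Qed.



Lemma conjComplex (a b : R) : (Complex a b : C)^* = Complex a (- b).
Proof. by []. Qed.

Lemma ImD (x y : C) : Im (x + y) = Im x + Im y.
Proof. by case: x => ? ?; case: y. Qed.

Lemma Im_sum I (r : seq I) (P : pred I) (F : I -> C) :
  Im (\sum_(i <- r | P i) F i) = \sum_(i <- r | P i) Im (F i).
Proof. by apply: (big_morph _ ImD (erefl _)). Qed.

Lemma Im_real (z : C) : z^* = z -> Im z = 0.
Proof.
case: z => a b; rewrite conjComplex => -[] /= /eqP.
by rewrite eq_sym -subr_eq0 opprK -mulr2n mulrn_eq0 /= => /eqP.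
Qed.

Lemma mulRC (a x y : R) : a%:C * (Complex x y : C) = Complex (a * x) (a * y).
Proof. by rewrite /GRing.mul /=; congr Complex; rewrite !mul0r ?subr0 ?addr0. Qed.

Lemma addCC (a b x y : R) : (Complex a b : C) + Complex x y = Complex (a + x) (b + y).
Proof. by []. Qed.

Definition phi N (X : 'M[R]_N) : 'M[C]_N :=
  \matrix_(i, j) if (i < j)%N then Complex (X i j) (X j i)
                 else if i == j then Complex (X i i) 0
                 else Complex (X j i) (- X i j).

Lemma phi_lin N (a : R) (X Y : 'M[R]_N) : phi (a *: X + Y) = a%:C *: phi X + phi Y.
Proof.
apply/matrixP => i j; rewrite !mxE.
case: ifP => _; last case: ifP => _; rewrite ?mxE /= mulRC addCC; congr Complex; rewrite ?mulr0 ?addr0 ?opprD ?mulrN //.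
Qed.


Definition Lmx N m n (A B : 'M[C]_N) (s t : seq C) (H : 'M[C]_N) : 'M[C]_(m, n) :=
  \matrix_(i < m, j < n) \tr (specproj A s`_i *m specproj B t`_j *m H).

Lemma Lmx_lin N m n (A B : 'M[C]_N) s t (a : C) (H K : 'M[C]_N) :
  Lmx m n A B s t (a *: H + K) = a *: Lmx m n A B s t H + Lmx m n A B s t K.
Proof.
by apply/matrixP => i j; rewrite !mxE mulmxDr -scalemxAr mxtraceD mxtraceZ.
Qed.

Definition psi na nb (M : 'M[C]_(na.+1, nb.+1)) : 'rV[R]_(na.+1 * nb.+1 + na * nb) :=
  row_mx (mxvec (map_mx Re M))
         (mxvec (\matrix_(i < na, j < nb)
                    Im (M (widen_ord (leqnSn na) i) (widen_ord (leqnSn nb) j)))).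

Lemma ReD (x y : C) : Re (x + y) = Re x + Re y.
Proof. by case: x => ? ?; case: y. Qed.

Lemma Re_lin (a : R) (x y : C) : Re (a%:C * x + y) = a * Re x + Re y.
Proof. by case: x => ? ?; rewrite ReD mulRC. Qed.

Lemma Im_lin (a : R) (x y : C) : Im (a%:C * x + y) = a * Im x + Im y.
Proof. by case: x => ? ?; rewrite ImD mulRC. Qed.

Lemma psi_lin na nb (a : R) (M M' : 'M[C]_(na.+1, nb.+1)) :
  psi (a%:C *: M + M') = a *: psi M + psi M'.
Proof.
rewrite /psi scale_row_mx add_row_mx -!linearZ -!linearD /=; congr row_mx; congr mxvec;
  by apply/matrixP => i j; rewrite !mxE ?Re_lin ?Im_lin.
Qed.

Definition Fmap N na nb (A B : 'M[C]_N) (s t : seq C) (v : 'rV[R]_(N * N)) :=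
  psi (Lmx na.+1 nb.+1 A B s t (phi (vec_mx v))).

Lemma Fmap_lin N na nb (A B : 'M[C]_N) s t : linear (Fmap na nb A B s t).
Proof.
move=> a u v; rewrite /Fmap linearP /= phi_lin Lmx_lin.
by rewrite psi_lin.
Qed.

HB.instance Definition _ N na nb (A B : 'M[C]_N) s t :=
  GRing.isLinear.Build R _ _ _ (Fmap na nb A B s t) (Fmap_lin na nb A B s t).

Lemma Fmap_mul N na nb (A B : 'M[C]_N) s t v :
  v *m lin1_mx (Fmap na nb A B s t) = Fmap na nb A B s t v.
Proof. exact: mul_rV_lin1. Qed.

Lemma inj_rank m k (M : 'M[R]_(m, k)) :
  (forall v : 'rV[R]_m, v *m M = 0 -> v = 0) -> (m <= k)%N.
Proof.
move=> h; have : row_free M.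
  rewrite -kermx_eq0; apply/rowV0P => v hv; apply: h; exact/sub_kermxP.
by rewrite /row_free => /eqP <-; exact: rank_leq_col.
Qed.


End Base.

Section S.
Variable R : realType.
Local Notation C := R[i].
Local Notation Im := (@complex.Im R).
Local Notation Re := (@complex.Re R).

Lemma herm_T n (X : 'M[C]_n) : X^t* = X -> (X^T)^t* = X^T.
Proof. by move=> h; rewrite -[in RHS]h -map_trmx. Qed.

Lemma specproj_herm n (A : 'M[C]_n) a : (specproj A a)^t* = specproj A a.
Proof. by apply: herm_T; apply: proj_ortho_herm. Qed.

Lemma proj_ortho_eq0 p n (U : 'M[C]_(p, n)) : U = 0 -> proj_ortho U = 0.
Proof.
move=> ->; have := proj_ortho_sub (0 : 'M[C]_(p, n)) 1%:M.
by rewrite mul1mx => /submx0null.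
Qed.

Lemma specproj0 n (A : 'M[C]_n) a : ~~ eigenvalue A a -> specproj A a = 0.
Proof.
rewrite -eigenvalue_tr /eigenvalue negbK => /eqP E0.
by rewrite /specproj (proj_ortho_eq0 E0) trmx0.
Qed.

Lemma specproj_sum n (A : 'M[C]_n) (s : seq C) m : A^t* = A -> uniq s ->
  (forall a, eigenvalue A a = (a \in s)) -> size s = m ->
  \sum_(i < m) specproj A s`_i = 1%:M.
Proof.
move=> hA us hs sm.
rewrite -(big_mkord xpredT (fun i => specproj A s`_i)) -sm -(big_nth 0 xpredT (specproj A)).
have e : \sum_(a <- s) specproj A a = (\sum_(a <- s) proj_ortho (eigenspace A^T a))^T.
  by rewrite linear_sum.
have hs' : forall a, eigenvalue A^T a = (a \in s) by move=> a; rewrite eigenvalue_tr.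
by rewrite e (herm_complete (herm_T hA) us hs') trmx1.
Qed.


Lemma KD_from_L N (A B : 'M[C]_N) (s t : seq C) m n rho sigma :
  size s = m -> size t = n ->
  (forall a, eigenvalue A a = (a \in s)) -> (forall b, eigenvalue B b = (b \in t)) ->
  Lmx m n A B s t rho = Lmx m n A B s t sigma -> KD A B rho = KD A B sigma.
Proof.
move=> sm tn hs ht hL; apply: boolp.funext => x; rewrite /KD.
case: (boolP ((x.1)%:C \in s)) => h1; last first.
  by rewrite specproj0 ?hs // !mul0mx.
case: (boolP ((x.2)%:C \in t)) => h2; last first.
  by rewrite (specproj0 (A:=B)) ?ht // mulmx0 !mul0mx.
have i1 : (index (x.1)%:C s < m)%N by rewrite -sm index_mem.
have i2 : (index (x.2)%:C t < n)%N by rewrite -tn index_mem.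
have := congr1 (fun M : 'M[C]_(m, n) => M (Ordinal i1) (Ordinal i2)) hL; rewrite !mxE /=.
by rewrite !nth_index.
Qed.

Lemma tr_real n (P H : 'M[C]_n) : P^t* = P -> H^t* = H ->
  (\tr (P *m H))^* = \tr (P *m H).
Proof.
move=> hP hH.
have e : \tr ((P *m H)^t*) = (\tr (P *m H))^* by rewrite trace_map_mx mxtrace_tr.
by rewrite -e (adjM P H) hP hH mxtrace_mulC.
Qed.

Lemma Lmx_rowsum N (A B : 'M[C]_N) (s t : seq C) m n H i :
  B^t* = B -> uniq t -> (forall b, eigenvalue B b = (b \in t)) -> size t = n ->
  \sum_(j < n) Lmx m n A B s t H i j = \tr (specproj A s`_i *m H).
Proof.
move=> hB ut ht tn.
under eq_bigr => j _ do rewrite mxE.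
by rewrite -linear_sum /= -mulmx_suml -mulmx_sumr (specproj_sum hB ut ht tn) mulmx1.
Qed.

Lemma Lmx_colsum N (A B : 'M[C]_N) (s t : seq C) m n H j :
  A^t* = A -> uniq s -> (forall a, eigenvalue A a = (a \in s)) -> size s = m ->
  \sum_(i < m) Lmx m n A B s t H i j = \tr (specproj B t`_j *m H).
Proof.
move=> hA us hs sm.
under eq_bigr => i _ do rewrite mxE.
by rewrite -linear_sum /= -!mulmx_suml (specproj_sum hA us hs sm) mul1mx.
Qed.

Lemma Lmx_trace N (A B : 'M[C]_N) (s t : seq C) m n H :
  A^t* = A -> uniq s -> (forall a, eigenvalue A a = (a \in s)) -> size s = m ->
  B^t* = B -> uniq t -> (forall b, eigenvalue B b = (b \in t)) -> size t = n ->
  \tr H = \sum_(i < m) \sum_(j < n) Lmx m n A B s t H i j.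
Proof.
move=> hA us hs sm hB ut ht tn.
under eq_bigr => i _ do rewrite (Lmx_rowsum _ _ _ _ hB ut ht tn).
by rewrite -linear_sum /= -mulmx_suml (specproj_sum hA us hs sm) mul1mx.
Qed.

Lemma split_ord n (i : 'I_n.+1) :
  i = ord_max \/ exists i' : 'I_n, i = widen_ord (leqnSn n) i'.
Proof.
case: (ltngtP i n) => h.
- by right; exists (Ordinal h); apply: val_inj.
- by have := ltn_ord i; rewrite ltnS leqNgt h.
- by left; apply: val_inj.
Qed.

Lemma Lzero na nb (M : 'M[C]_(na.+1, nb.+1)) : psi M = 0 ->
  (forall i, Im (\sum_j M i j) = 0) -> (forall j, Im (\sum_i M i j) = 0) -> M = 0.
Proof.
move=> /eqP; rewrite /psi row_mx_eq0 !mxvec_eq0 => /andP[/eqP hRe /eqP hIm] hr hc.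
have ReM i j : Re (M i j) = 0.
  by have := congr1 (fun X : 'M[R]_(na.+1, nb.+1) => X i j) hRe; rewrite !mxE.
have ImW i j : Im (M (widen_ord (leqnSn na) i) (widen_ord (leqnSn nb) j)) = 0.
  by have := congr1 (fun X : 'M[R]_(na, nb) => X i j) hIm; rewrite !mxE.
have ImWm i : Im (M (widen_ord (leqnSn na) i) ord_max) = 0.
  have := hr (widen_ord (leqnSn na) i); rewrite Im_sum big_ord_recr /= big1 ?add0r //.
  all: try by move=> j _; apply: ImW.
have ImWa i j : Im (M (widen_ord (leqnSn na) i) j) = 0.
  by case: (split_ord j) => [->|[j' ->]]; [apply: ImWm | apply: ImW].
have ImM i j : Im (M i j) = 0.
  case: (split_ord i) => [->|[i' ->]]; last exact: ImWa.
  have := hc j; rewrite Im_sum big_ord_recr /= big1 ?add0r //.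
  all: try by move=> k _; apply: ImWa.
apply/matrixP => i j; rewrite mxE; move: (ReM i j) (ImM i j).
by case: (M i j) => a b /= -> ->.
Qed.


Lemma phi_herm N (X : 'M[R]_N) : (phi X)^t* = phi X.
Proof.
apply/matrixP => i j; rewrite !mxE.
case: (ltngtP i j) => h.
- have nij : (j == i) = false by apply/eqP => e; move: h; rewrite e ltnn.
  by rewrite nij conjComplex opprK.
- have nij : (i == j) = false by apply/eqP => e; move: h; rewrite e ltnn.
  by rewrite nij conjComplex.
- have e : i = j by apply: val_inj.
  by rewrite e eqxx conjComplex oppr0.
Qed.

Lemma phi_inj N (X : 'M[R]_N) : phi X = 0 -> X = 0.
Proof.
move=> h; apply/matrixP => i j; rewrite mxE.
case: (ltngtP i j) => hij.
- by have := congr1 (fun M : 'M[C]_N => Re (M i j)) h; rewrite !mxE hij.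
- by have := congr1 (fun M : 'M[C]_N => Im (M j i)) h; rewrite !mxE hij.
- have e : i = j by apply: val_inj.
  by have := congr1 (fun M : 'M[C]_N => Re (M i j)) h; rewrite !mxE e ltnn eqxx.
Qed.


Lemma Fmap_ker N na nb (A B : 'M[C]_N) (s t : seq C) (v : 'rV[R]_(N * N)) :
  A^t* = A -> B^t* = B -> uniq s -> uniq t ->
  (forall a, eigenvalue A a = (a \in s)) -> (forall b, eigenvalue B b = (b \in t)) ->
  size s = na.+1 -> size t = nb.+1 -> KD_distinguishes_states A B ->
  Fmap na nb A B s t v = 0 -> v = 0.
Proof.
move=> hA hB us ut hs ht ss st hD hF.
set X := vec_mx v; set H := phi X.
have hH : H^t* = H := phi_herm X.
have hM : Lmx na.+1 nb.+1 A B s t H = 0.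
  apply: Lzero; first exact: hF.
  - move=> i; rewrite (Lmx_rowsum _ _ _ _ hB ut ht st); apply: Im_real.
    by apply: tr_real => //; exact: specproj_herm.
  - move=> j; rewrite (Lmx_colsum _ _ _ _ hA us hs ss); apply: Im_real.
    by apply: tr_real => //; exact: specproj_herm.
have L0 : Lmx na.+1 nb.+1 A B s t (0 : 'M_N) = 0.
  by apply/matrixP => i j; rewrite !mxE mulmx0 mxtrace0.
have hK : KD A B H = KD A B 0.
  by apply: (KD_from_L ss st hs ht); rewrite hM L0.
have tH : \tr H = 0.
  rewrite (Lmx_trace _ hA us hs ss hB ut ht st) hM.
  by rewrite big1 // => i _; rewrite big1 // => j _; rewrite mxE.
have X0 : X = 0 by apply: phi_inj; exact: (KD_zero hD hH tH hK).
by rewrite -[v]vec_mxK -/X X0 linear0.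
Qed.

End S.

Theorem proposition11 (R : realType) (N NA NB : nat) (A B : 'M[R[i]]_N) :
  is_hermitian_op A -> is_hermitian_op B ->
  num_distinct_eigenvalues A NA -> num_distinct_eigenvalues B NB ->
  KD_distinguishes_states A B ->
  (2 * N ^ 2 - 1 <= (2 * NA - 1) * (2 * NB - 1))%N.
Proof.
move=> hA hB [s [us ss hs]] [t [ut st ht]] hD.
case: N A B hA hB hs ht hD => [|N] A B hA hB hs ht hD; first by [].
have [a eva] := eigenvalue_closed A (isT : (0 < N.+1)%N).
have [b evb] := eigenvalue_closed B (isT : (0 < N.+1)%N).
rewrite hs in eva; rewrite ht in evb.
case: NA ss => [|na] ss; first by move: eva; rewrite (size0nil ss).
case: NB st => [|nb] st; first by move: evb; rewrite (size0nil st).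
have := @inj_rank R _ _ (lin1_mx (Fmap na nb A B s t)).
move=> /(_ _) H.
have {}H : (N.+1 * N.+1 <= na.+1 * nb.+1 + na * nb)%N.
  apply: H => v; rewrite Fmap_mul; exact: Fmap_ker.
rewrite expnS expn1.
move: H; clear; nia.
Qed.
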